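(* Let $f_1,\dots,f_m\in\mathbb{C}[x_1,\dots,x_n]$, fix an index $k\in\{1,\dots,n\}$, and let $f_{m+1}=x_k-u_0$, where $u_0$ is an extra variable treated as a parameter. Let $B$ be a finite favourable set of monomials in $x_1,\dots,x_n$ with associated monomial-multiple sets $T_1,\dots,T_{m+1}$ and coefficient matrix $\mathbf{C}(u_0)$ (as defined in the context). Partition $B=B_1\sqcup B_2$ in one of the two ways (a) $B_1=B\cap T_{m+1}$, or (b) $B_1=\{\mathbf{x}^{\alpha}\in B \mid \mathbf{x}^{\alpha}/x_k\in T_{m+1}\}$, with $B_2=B\setminus B_1$. Order the columns of $\mathbf{C}(u_0)$ so that those indexed by $B_1$ (vector $\mathbf{b}_1$) come first, followed by those indexed by $B_2$ (vector $\mathbf{b}_2$), and order the rows so that the rows coming from $f_1,\dots,f_m$ (upper block) precede the rows coming from $f_{m+1}$ (lower block). This gives a block partition $$\mathbf{C}(u_0)\begin{bmatrix}\mathbf{b}_1\\ \mathbf{b}_2\end{bmatrix}=\begin{bmatrix}\mathbf{C}_{11}&\mathbf{C}_{12}\\ \mathbf{C}_{21}&\mathbf{C}_{22}\end{bmatrix}\begin{bmatrix}\mathbf{b}_1\\ \mathbf{b}_2\end{bmatrix}.$$ If $\mathbf{C}_{12}$ has full column rank, then the resultant matrix constraint $\mathbf{M}(u_0)\mathbf{b}=\mathbf{0}$ can be converted into an eigenvalue problem: rows may be deleted from the upper block to obtain a square matrix $\mathbf{M}(u_0)$ whose upper-right block $\hat{\mathbf{A}}_{12}$ is square and invertible, and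 there is a square matrix $\mathbf{X}$ whose entries are functions of the coefficients of $f_1,\dots,f_m$ (and do not depend on $u_0$) such that every vector $\mathbf{b}=(\mathbf{b}_1,\mathbf{b}_2)$ with $\mathbf{M}(u_0)\mathbf{b}=\mathbf{0}$ satisfies $\mathbf{X}\mathbf{b}_1=u_0\mathbf{b}_1$ in case (a), and $\mathbf{X}\mathbf{b}_1=-\frac{1}{u_0}\mathbf{b}_1$ (for $u_0\neq 0$) in case (b).
   Context: For a finite set $B$ of monomials in $x_1,\dots,x_n$ and $i=1,\dots,m+1$, let $T_i$ be the set of all monomials $t$ such that every monomial occurring in $t f_i$ lies in $B$ (for $f_{m+1}=x_k-u_0$, $u_0$ is treated as a coefficient, so this means $t x_k\in B$ and $t\in B$). It is assumed that $B$ equals the set of monomials occurring in the extended system $\{t f_i : t\in T_i,\ i=1,\dots,m+1\}$. The coefficient matrix $\mathbf{C}(u_0)$ has one row for each pair $(i,t)$ with $t\in T_i$ and one column for each monomial of $B$; the entry is the coefficient of that monomial in $t f_i$ (so entries are affine in $u_0$). $B$ is called favourable if $\sum_{j=1}^{m+1}|T_j|\ge |B|$, $\min_j |T_j|>0$, and $\mathbf{C}(u_0)$ has column rank $|B|$ for a random value of $u_0$. The resultant matrix constraint is $\mathbf{M}(u_0)\mathbf{b}=\mathbf{0}$, where $\mathbf{M}(u_0)$ is a square matrix obtained from $\mathbf{C}(u_0)$ by deleting rows and $\mathbf{b}$ is the vector of monomials of $B$ in the chosen order. *)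

(* Defs.v *)
From mathcomp Require Import all_boot all_algebra.
From mathcomp Require Import finmap mpoly.
From mathcomp.real_closed Require Import complex.
From mathcomp Require Import Rstruct.

Set Implicit Arguments.
Unset Strict Implicit.
Unset Printing Implicit Defensive.

Import GRing.Theory.
Local Open Scope ring_scope.
Local Open Scope fset_scope.

Definition CC : numClosedFieldType := complex.complex Rdefinitions.R.

Section Resultant.
Variables (n m : nat).
Local Notation mono := ('X_{1..n}).
Local Notation poly := ({mpoly CC[n]}).

(* T_i for a polynomial p (one of f_1..f_m): all monomials t such that every
   monomial occurring in t*p lies in B.  Any such t is of the form b - s with
   b in B and s in the support of p (when p <> 0), so we search among these
   candidates (for p = 0 this gives the empty set). *)
Definition Tset (B : {fset mono}) (p : poly) : {fset mono} :=
  seq_fset tt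
    [seq t <- [seq (b - s)%MM | b <- enum_fset B, s <- msupp p]
       | all (fun c => c \in B) (msupp ('X_[t] * p))].

(* T_{m+1} for f_{m+1} = x_k - u0 : t in B and t*x_k in B. *)
Definition Tlast (B : {fset mono}) (k : 'I_n) : {fset mono} :=
  [fset t in B | (t + U_(k))%MM \in B].

Definition urows (f : 'I_m -> poly) (B : {fset mono}) : seq (poly * mono) :=
  flatten [seq [seq (f i, t) | t <- enum_fset (Tset B (f i))] | i <- enum 'I_m].

Definition elt (A : {fset mono}) (j : nat) : mono := nth 0%MM (enum_fset A) j.

Definition up_entry (r : poly * mono) (c : mono) : CC := ('X_[r.2] * r.1)@_c.

(* entry of the row t*(x_k - u0) at column c *)
Definition low_entry (k : 'I_n) (u0 : CC) (t c : mono) : CC :=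
  (c == (t + U_(k))%MM)%:R - u0 * (c == t)%:R.

Definition Cup (f : 'I_m -> poly) (B A : {fset mono}) :
  'M[CC]_(size (urows f B), #|` A|) :=
  \matrix_(i, j) up_entry (nth (0, 0%MM) (urows f B) i) (elt A j).

Definition Clow (k : 'I_n) (B : {fset mono}) (u0 : CC) (A : {fset mono}) :
  'M[CC]_(#|` Tlast B k|, #|` A|) :=
  \matrix_(i, j) low_entry k u0 (elt (Tlast B k) i) (elt A j).

Definition Cmat (f : 'I_m -> poly) (k : 'I_n) (B : {fset mono}) (u0 : CC) :=
  col_mx (Cup f B B) (Clow k B u0 B).

Definition ext_monomials (f : 'I_m -> poly) (k : 'I_n) (B : {fset mono}) :
  seq mono :=
  flatten [seq msupp ('X_[r.2] * r.1) | r <- urows f B]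
  ++ flatten [seq [:: (t + U_(k))%MM; t] | t <- enum_fset (Tlast B k)].

Definition B_is_ext_support f k B : Prop :=
  forall c, (c \in B) = (c \in ext_monomials f k B).

(* favourable: sum |T_j| >= |B|, min |T_j| > 0, and C(u0) has column rank |B|
   for a generic (i.e. some) value of u0. *)
Definition favourable (f : 'I_m -> poly) (k : 'I_n) (B : {fset mono}) : Prop :=
  [/\ (#|` B| <= \sum_(i < m) #|` Tset B (f i)| + #|` Tlast B k|)%N,
      (forall i, 0 < #|` Tset B (f i)|)%N,
      (0 < #|` Tlast B k|)%N &
      exists u0 : CC, \rank (Cmat f k B u0) = #|` B| ].

Definition B1a (k : 'I_n) (B : {fset mono}) : {fset mono} := B `&` Tlast B k.
Definition B1b (k : 'I_n) (B : {fset mono}) : {fset mono} :=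
  [fset a in B | (0 < a k)%N && ((a - U_(k))%MM \in Tlast B k)].

Definition Mmat (f : 'I_m -> poly) (k : 'I_n) (B B1 : {fset mono})
  (s : 'I_#|` B `\` B1| -> 'I_(size (urows f B))) (u0 : CC) :=
  block_mx (rowsub s (Cup f B B1)) (rowsub s (Cup f B (B `\` B1)))
           (Clow k B u0 B1) (Clow k B u0 (B `\` B1)).

Definition eigen_conversion (f : 'I_m -> poly) (k : 'I_n) (B B1 : {fset mono})
  (lam : CC -> CC) (dom : CC -> Prop) : Prop :=
  let B2 := B `\` B1 in
  [/\ #|` Tlast B k| = #|` B1|,
      (exists s : 'I_#|` B2| -> 'I_(size (urows f B)),
          injective s /\ rowsub s (Cup f B B2) \in unitmx) &
      forall s : 'I_#|` B2| -> 'I_(size (urows f B)),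
        injective s -> rowsub s (Cup f B B2) \in unitmx ->
        exists X : 'M[CC]_#|` B1|,
          forall u0 : CC, dom u0 ->
          forall (b1 : 'cV[CC]_#|` B1|) (b2 : 'cV[CC]_#|` B2|),
            @Mmat f k B B1 s u0 *m col_mx b1 b2 = 0 ->
            X *m b1 = lam u0 *: b1].

End Resultant.
Arguments Tset {n}.
Arguments Tlast {n}.
Arguments urows {n m}.
Arguments Cup {n m}.
Arguments Clow {n}.
Arguments Cmat {n m}.
Arguments B_is_ext_support {n m}.
Arguments favourable {n m}.
Arguments B1a {n}.
Arguments B1b {n}.
Arguments Mmat {n m}.
Arguments eigen_conversion {n m}.

(* Main.v *)
Require Import Defs.
From mathcomp Require Import all_boot all_algebra.
From mathcomp Require Import finmap mpoly.

Import GRing.Theory.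
Local Open Scope ring_scope.
Local Open Scope fset_scope.

Section H.
Variable n : nat.
Local Notation mono := ('X_{1..n}).

Lemma elt_in (A : {fset mono}) (j : 'I_#|` A|) : elt A j \in A.
Proof. by rewrite /elt mem_nth. Qed.

Lemma elt_inj (A : {fset mono}) (i j : 'I_#|` A|) : (elt A i == elt A j) = (i == j).
Proof. by rewrite /elt nth_uniq ?fset_uniq. Qed.

Lemma Tlast_sub (B : {fset mono}) k t : t \in Tlast B k -> t \in B.
Proof. by rewrite !inE => /andP[]. Qed.

Lemma Tlast_add (B : {fset mono}) k t : t \in Tlast B k -> (t + U_(k))%MM \in B.
Proof. by rewrite !inE => /andP[]. Qed.

Lemma B1a_eq k (B : {fset mono}) : B1a k B = Tlast B k.
Proof. apply/fsetIidPr/fsubsetP => t; exact: Tlast_sub. Qed.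

Lemma B1b_in k (B : {fset mono}) t : t \in Tlast B k -> (t + U_(k))%MM \in B1b k B.
Proof.
move=> tT; rewrite /B1b inE; apply/andP; split; first exact: Tlast_add.
by rewrite /= addmK tT andbT mnmDE mnm1E eqxx addn1.
Qed.
End H.
Arguments elt_in {n A} j.
Arguments elt_inj {n A} i j.

Section M.
Variable n : nat.
Local Notation mono := ('X_{1..n}).
Variables (k : 'I_n) (B : {fset mono}).
Local Notation Tl := (Tlast B k).

Definition Lm1 (A : {fset mono}) : 'M[CC]_(#|` Tl|, #|` A|) :=
  \matrix_(i, j) ((elt A j == (elt Tl i + U_(k))%MM)%:R).
Definition Lm0 (A : {fset mono}) : 'M[CC]_(#|` Tl|, #|` A|) :=
  \matrix_(i, j) ((elt A j == elt Tl i)%:R).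

Lemma Clow_split u0 A : Clow k B u0 A = Lm1 A - u0 *: Lm0 A.
Proof. by apply/matrixP => i j; rewrite !mxE /low_entry. Qed.

Lemma L0a1 : Lm0 Tl = 1%:M.
Proof. by apply/matrixP => i j; rewrite !mxE elt_inj eq_sym. Qed.

Lemma L0a0 : Lm0 (B `\` Tl) = 0.
Proof.
apply/matrixP => i j; rewrite !mxE.
case: eqP => // e; have := elt_in j; rewrite e in_fsetD elt_in //.
Qed.

Lemma L1b0 : Lm1 (B `\` B1b k B) = 0.
Proof.
apply/matrixP => i j; rewrite !mxE.
case: eqP => // e; have := elt_in j; rewrite e in_fsetD B1b_in // elt_in //.
Qed.

Lemma B1b_sub a : a \in B1b k B -> ((a - U_(k))%MM \in Tl) /\ (a - U_(k) + U_(k) = a)%MM.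
Proof.
rewrite /B1b inE => /andP[_ /andP[ak aT]]; split => //.
apply: submK; apply/mnm_lepP => i; rewrite mnm1E.
by case: eqP => // <-.
Qed.

Lemma B1b_eq : B1b k B = [fset (t + U_(k))%MM | t in Tl].
Proof.
apply/fsetP => a; apply/idP/imfsetP => [/B1b_sub[h1 h2]|[t tT ->]].
  by exists (a - U_(k))%MM.
exact: B1b_in.
Qed.

Lemma card_B1b : #|` Tl| = #|` B1b k B|.
Proof.
by rewrite B1b_eq [RHS]card_imfset //; apply: addIm.
Qed.

Lemma QtQ : (Lm1 (B1b k B))^T *m Lm1 (B1b k B) = 1%:M.
Proof.
apply/matrixP => j j'; rewrite !mxE.
have [h1 h2] := B1b_sub _ (elt_in j).
have i0lt : (index (elt (B1b k B) j - U_(k))%MM (enum_fset Tl) < #|` Tl|)%N.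
  by rewrite index_mem.
have [i0 ei0] : exists i0 : 'I_#|` Tl|, elt Tl i0 = (elt (B1b k B) j - U_(k))%MM.
  by exists (Ordinal i0lt); rewrite /elt nth_index.
rewrite (bigD1 i0) // big1 ?addr0.
  by rewrite !mxE ei0 h2 eqxx mul1r /= addr0 elt_inj eq_sym.
move=> i ii0; rewrite !mxE; case: eqP; last by rewrite mul0r.
move=> e; exfalso; move/negP: ii0; apply; rewrite -elt_inj ei0 e addmK //.
Qed.
End M.
Arguments Lm1 {n}.
Arguments Lm0 {n}.

Local Open Scope ring_scope.
Lemma solve_b2 (p q : nat) (A11 : 'M[CC]_(q, p)) (A12 : 'M[CC]_q) (b1 : 'cV[CC]_p) (b2 : 'cV[CC]_q) :
  A12 \in unitmx -> A11 *m b1 + A12 *m b2 = 0 ->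
  b2 = - (invmx A12 *m A11 *m b1).
Proof.
move=> U /eqP; rewrite addrC addr_eq0 => /eqP e.
by rewrite -(mulKmx U b2) e mulmxN mulmxA.
Qed.

Lemma exists_s (n m : nat) (f : 'I_m -> {mpoly CC[n]}) (B D : {fset 'X_{1..n}}) :
  \rank (Cup f B D) = #|` D| ->
  exists s : 'I_#|` D| -> 'I_(size (urows f B)),
    injective s /\ rowsub s (Cup f B D) \in unitmx.
Proof.
move=> rk; have rf : row_full (Cup f B D) by rewrite /row_full rk.
exists (fun i => fullrankfun rf i); split.
  exact: fullrankfun_inj.
exact: fullrowsub_unit.
Qed.

Theorem proposition1 (n m : nat) (f : 'I_m -> {mpoly CC[n]}) (k : 'I_n)
  (B : {fset 'X_{1..n}}) :
  B_is_ext_support f k B ->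
  favourable f k B ->
  (\rank (Cup f B (B `\` B1a k B)) = #|` B `\` B1a k B| ->
     eigen_conversion f k B (B1a k B) (fun u0 => u0) (fun _ => True)) /\
  (\rank (Cup f B (B `\` B1b k B)) = #|` B `\` B1b k B| ->
     eigen_conversion f k B (B1b k B) (fun u0 => - u0^-1) (fun u0 => u0 != 0)).
Proof.
move=> _ _; split.
  rewrite B1a_eq => rk; split => //; first exact: exists_s.
  move=> s _ sU.
  exists (Lm1 k B (Tlast B k) - Lm1 k B (B `\` Tlast B k) *m
            (invmx (rowsub s (Cup f B (B `\` Tlast B k))) *m rowsub s (Cup f B (Tlast B k)))).
  move=> u0 _ b1 b2; rewrite /Mmat mul_block_col => /eqP.
  rewrite col_mx_eq0 => /andP[/eqP e1 /eqP e2].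
  have hb2 := @solve_b2 _ _ _ _ _ _ sU e1.
  move: e2; rewrite !Clow_split L0a1 L0a0 scaler0 subr0 hb2 => e2.
  apply/eqP; rewrite -subr_eq0; apply/eqP; rewrite -e2.
  rewrite !mulmxBl mulmxN scalemx1 mul_scalar_mx !mulmxA.
  by rewrite addrAC.
move=> rk; split; first exact: card_B1b.
  exact: exists_s.
move=> s _ sU.
set B1 := B1b k B.
set Q := Lm1 k B B1.
set Y := Lm0 k B B1 - Lm0 k B (B `\` B1) *m
            (invmx (rowsub s (Cup f B (B `\` B1))) *m rowsub s (Cup f B B1)).
exists (- (Q^T *m Y)).
move=> u0 u0n0 b1 b2; rewrite /Mmat mul_block_col => /eqP.
rewrite col_mx_eq0 => /andP[/eqP e1 /eqP e2].
have hb2 := @solve_b2 _ _ _ _ _ _ sU e1.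
move: e2; rewrite !Clow_split L1b0 sub0r hb2 => e2.
have eQ : Q *m b1 = u0 *: (Y *m b1).
  apply/eqP; rewrite -subr_eq0; apply/eqP; rewrite -e2 /Y.
  rewrite !mulmxBl scalerBr mulNmx mulmxN !scalemxAl !mulmxA.
  by rewrite opprK opprB addrA addrAC.
have eY : Y *m b1 = u0^-1 *: (Q *m b1).
  by rewrite eQ scalerA mulVf // scale1r.
rewrite mulNmx -mulmxA eY -scalemxAr mulmxA QtQ mul1mx scaleNr //.
Qed.
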